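(* Let $(G_x \mid x \in \mathbb{N}_0)$ be the coclass family defined by $\eta \in H^3(P,T)$, let $L$ be an elementary abelian subgroup of $P$ and $x \in \mathbb{N}_0$. Then: (a) $\overline{L}_x$ splits over $M_x$ if and only if $L \in \mathcal{L}_\eta$; (b) if $\overline{L}_x$ splits over $M_x$, then $\overline{L}$ splits over $T$.
   Context: Conventions: normalised cocycles $Z^n$, coboundaries $B^n$, cohomology $H^n$ for right modules written additively; $\mathrm{Ext}(\tau)$ for $\tau\in Z^2(G,M)$ is $G\times M$ with $(g,m)(h,n)=(gh,m^h+n+\tau(g,h))$. Setting: $S$ an infinite pro-$p$-group of finite coclass; $T = \gamma_\ell(S)$ ($\ell$ large) with $T\cong \mathbb{Z}_p^d$, $P = S/T$ finite with $|P| = p^m$, the series $T_0=T$, $T_{i+1}=[T_i,S]$ with all indices $p$; $T$ an additive $P$-module via conjugation; $S = \mathrm{Ext}(\rho)$, $\rho \in Z^2(P,T)$. For $L\leq P$, $\overline{L}$ is the full preimage of $L$ in $S$. $\mathcal{L}$ is the set of elementary abelian $L\leq P$ with $\rho_L \in B^2(L,T)$, and $\mathcal{L}_\eta = \{L\in\mathcal{L} \mid \mathrm{res}^P_L(\eta) = 0 \in H^3(L,T)\}$. Coclass family: $e=3m$, $M_x = T/p^{x+e}T$; $pro_x: Z^2(P,T)\to Z^2(P,M_x)$ induced by projection, with image $I^2(P,M_x)$; $J^2(P,M_x)$ the image of $Z^2(P,p^{x+e-m}T/p^{x+e}T)\to Z^2(P,M_x)$ induced by inclusion; $K^2(P,M_x)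 \leq J^2(P,M_x)$ fixed complements of $I^2(P,M_x)$ in $Z^2(P,M_x)$ with $mul(K^2(P,M_x)) = K^2(P,M_{x+1})$, $mul$ induced by $t+p^{x+e}T\mapsto pt+p^{x+e+1}T$. The composite $Z^2(P,M_x)\to H^2(P,M_x)\to H^3(P,p^{x+e}T)\to H^3(P,T)$ (quotient, connecting homomorphism, division by $p^{x+e}$) restricts to an isomorphism on $K^2(P,M_x)$; $\eta_x\in K^2(P,M_x)$ is the preimage of $\eta$, $\rho_x = pro_x(\rho)$, $G_x = \mathrm{Ext}(\rho_x+\eta_x)$, with $M_x$ identified with $\{(1,m)\}$. For $L \leq P$, $\overline{L}_x$ is the full preimage of $L$ under $G_x \to P$, $(g,m)\mapsto g$. *)

(* Defs.v *)
From HB Require Import structures.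
From mathcomp Require Import all_boot all_order all_algebra all_fingroup all_solvable.
From mathcomp Require Import boolp.
Set Implicit Arguments. Unset Strict Implicit. Unset Printing Implicit Defensive.
Import GRing.Theory.
Local Open Scope ring_scope.

Section PAdic.
Variable p : nat.
Definition padic_ok (f : nat -> int) := forall n, f n = (f n.+1 %% (p ^ n)%:Z)%Z.
Record padic := Padic { padic_val :> nat -> int; padic_valP : padic_ok padic_val }.
HB.instance Definition _ := gen_eqMixin padic.
HB.instance Definition _ := gen_choiceMixin padic.

Lemma padic_eq (a b : padic) : padic_val a =1 padic_val b -> a = b.
Proof.
case: a b => f fP [g gP] /= /funext efg; subst g.
by rewrite (Prop_irrelevance fP gP).
Qed.

Lemma modz_mulr_mod (a q r : int) : (((a %% (q * r))%Z %% q)%Z = (a %% q)%Z).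
Proof.
rewrite [in RHS](intdiv.divz_eq a (q * r)) mulrA -[_ * q * r]mulrA [q * r]mulrC mulrA.
by rewrite intdiv.modzMDl.
Qed.

Lemma padic_red (a : padic) n : ((a n) %% (p ^ n)%:Z)%Z = a n.
Proof. by rewrite (padic_valP a n) modz_mod. Qed.

Definition padic_lift (h : nat -> int) := fun n => (h n %% (p ^ n)%:Z)%Z.

Lemma padic_liftP (h : nat -> int) :
  (forall n, (h n.+1 = h n %[mod (p ^ n)%:Z])%Z) -> padic_ok (padic_lift h).
Proof.
move=> hc n; rewrite /padic_lift expnSr PoszM modz_mulr_mod.
by rewrite hc.
Qed.

Lemma padic_addC_ok (a b : padic) : padic_ok (padic_lift (fun n => a n + b n)).
Proof.
apply: padic_liftP => n.
by rewrite -modzDml -modzDmr -!padic_valP.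
Qed.

Lemma padic_opp_ok (a : padic) : padic_ok (padic_lift (fun n => - a n)).
Proof. by apply: padic_liftP => n; rewrite -modzNm -padic_valP. Qed.

Lemma padic_zero_ok : padic_ok (padic_lift (fun _ => 0)).
Proof. by apply: padic_liftP. Qed.

Definition padic_add a b := Padic (padic_addC_ok a b).
Definition padic_opp a := Padic (padic_opp_ok a).
Definition padic_zero := Padic padic_zero_ok.

Lemma padic_addA : associative padic_add.
Proof.
move=> a b c; apply: padic_eq => n /=; rewrite /padic_lift.
by rewrite modzDml modzDmr addrA.
Qed.
Lemma padic_addC : commutative padic_add.
Proof. by move=> a b; apply: padic_eq => n /=; rewrite /padic_lift addrC. Qed.
Lemma padic_add0 : left_id padic_zero padic_add.
Proof.
by move=> a; apply: padic_eq => n /=; rewrite /padic_lift mod0z add0r padic_red.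
Qed.
Lemma padic_addN : left_inverse padic_zero padic_opp padic_add.
Proof.
move=> a; apply: padic_eq => n /=; rewrite /padic_lift modzDml addNr.
by rewrite mod0z.
Qed.

HB.instance Definition _ :=
  GRing.isZmodule.Build padic padic_addA padic_addC padic_add0 padic_addN.
End PAdic.

Section Cohomology.
Variables (p : nat) (gT : finGroupType) (T : zmodType) (act : T -> gT -> T).

Definition is_right_action :=
  [/\ forall t, act t 1%g = t,
      forall t g h, act t (g * h)%g = act (act t g) h
    & forall t1 t2 g, act (t1 + t2) g = act t1 g + act t2 g].

(* a = b in T / p^k T *)
Definition eqmod (k : nat) (a b : T) := exists t : T, a - b = t *+ (p ^ k)%N.

(* Ext(tau) = gT x T with (g,m)(h,n) = (gh, m^h + n + tau(g,h)) *)
Definition ext_mul (tau : gT -> gT -> T) (a b : gT * T) : gT * T :=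
  ((a.1 * b.1)%g, act a.2 b.1 + b.2 + tau a.1 b.1).
Definition ext_inv (tau : gT -> gT -> T) (a : gT * T) : gT * T :=
  ((a.1)^-1%g, - act a.2 (a.1)^-1%g - tau a.1 (a.1)^-1%g).
Definition ext_comm tau (a b : gT * T) :=
  ext_mul tau (ext_mul tau (ext_inv tau a) (ext_inv tau b)) (ext_mul tau a b).

Inductive ext_gen (tau : gT -> gT -> T) (A : gT * T -> Prop) : gT * T -> Prop :=
| ext_gen1 : ext_gen tau A (1%g, 0)
| ext_genA z : A z -> ext_gen tau A z
| ext_genM y z : ext_gen tau A y -> ext_gen tau A z -> ext_gen tau A (ext_mul tau y z)
| ext_genV z : ext_gen tau A z -> ext_gen tau A (ext_inv tau z).

(* closure in the pro-p topology of Ext(tau), whose basis of neighbourhoods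
   of 1 is the family of (open normal) subgroups {1} x p^n T *)
Definition ext_closure tau (A : gT * T -> Prop) (z : gT * T) :=
  forall n, exists y t, A y /\ z = ext_mul tau y (1%g, t *+ (p ^ n)%N).

Definition ext_commsub tau (A B : gT * T -> Prop) :=
  ext_closure tau
    (ext_gen tau (fun z => exists a b, [/\ A a, B b & z = ext_comm tau a b])).

(* lower central series of S = Ext(tau): ext_lcs tau n = gamma_n(S),
   gamma_0 = gamma_1 = S, gamma_{n+1} = [gamma_n, S] *)
Fixpoint ext_lcs tau (n : nat) : gT * T -> Prop :=
  if n is n'.+1 then
    (if n' is _.+1 then ext_commsub tau (ext_lcs tau n') (fun _ => True)
     else fun _ => True)
  else fun _ => True.

(* the series T_0 = T = {(1,t)}, T_{i+1} = [T_i, S] *)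
Fixpoint ext_Tser tau (i : nat) : gT * T -> Prop :=
  if i is i'.+1 then ext_commsub tau (ext_Tser tau i') (fun _ => True)
  else fun z => z.1 = 1%g.

Definition ext_index tau (X Y : gT * T -> Prop) (k : nat) :=
  (forall y, Y y -> X y) /\
  exists s : 'I_k -> gT * T, (forall i, X (s i)) /\
    forall z, X z -> exists! i, Y (ext_mul tau (ext_inv tau (s i)) z).

Definition delta1 (c : gT -> T) (g h : gT) : T :=
  c h - c (g * h)%g + act (c g) h.
Definition delta2 (u : gT -> gT -> T) (g h k : gT) : T :=
  u h k - u (g * h)%g k + u g (h * k)%g - act (u g h) k.
Definition delta3 (f : gT -> gT -> gT -> T) (g1 g2 g3 g4 : gT) : T :=
  f g2 g3 g4 - f (g1 * g2)%g g3 g4 + f g1 (g2 * g3)%g g4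
  - f g1 g2 (g3 * g4)%g + act (f g1 g2 g3) g4.

(* tau restricted to A lies in Z^2(A, M), where M = T / ~ for eqv = equality
   (M = T) or eqv = eqmod k (M = T / p^k T) *)
Definition ncocycle2 (A : {set gT}) (eqv : T -> T -> Prop) (tau : gT -> gT -> T) :=
  (forall g, g \in A -> eqv (tau 1%g g) 0 /\ eqv (tau g 1%g) 0) /\
  (forall g h k, g \in A -> h \in A -> k \in A -> eqv (delta2 tau g h k) 0).

Definition ncobound2 (A : {set gT}) (eqv : T -> T -> Prop) (tau : gT -> gT -> T) :=
  exists c : gT -> T, c 1%g = 0 /\
    forall g h, g \in A -> h \in A -> eqv (tau g h) (delta1 c g h).

Definition ncocycle3 (A : {set gT}) (f : gT -> gT -> gT -> T) :=
  (forall g h, g \in A -> h \in A ->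
     [/\ f 1%g g h = 0, f g 1%g h = 0 & f g h 1%g = 0]) /\
  (forall g1 g2 g3 g4, g1 \in A -> g2 \in A -> g3 \in A -> g4 \in A ->
     delta3 f g1 g2 g3 g4 = 0).

Definition ncobound3 (A : {set gT}) (f : gT -> gT -> gT -> T) :=
  exists u : gT -> gT -> T,
    (forall g, g \in A -> u 1%g g = 0 /\ u g 1%g = 0) /\
    forall g h k, g \in A -> h \in A -> k \in A -> f g h k = delta2 u g h k.

(* The full preimage of A in Ext(tau) (tau with values in M = T/~) splits over
   M: there is a homomorphic section A -> Ext(tau), g |-> (g, c g), i.e. the
   image of the section is a complement to M. *)
Definition ext_splits (A : {set gT}) (eqv : T -> T -> Prop) (tau : gT -> gT -> T) :=
  exists c : gT -> T, forall g h, g \in A -> h \in A ->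
    let z := ext_mul tau (g, c g) (h, c h) in
    z.1 = (g * h)%g /\ eqv z.2 (c (g * h)%g).

(* The composite Z^2(P, T/p^k T) -> H^2 -> H^3(P, p^k T) -> H^3(P, T) maps the
   class of tau to the class of the 3-cocycle eta3: lift tau to a normalised
   T-valued cochain tau', take delta2 tau' (values in p^k T), divide by p^k. *)
Definition conn_map (k : nat) (tau : gT -> gT -> T) (eta3 : gT -> gT -> gT -> T) :=
  exists (tau' : gT -> gT -> T) (f : gT -> gT -> gT -> T),
    [/\ forall g h, eqmod k (tau g h) (tau' g h),
        forall g, tau' 1%g g = 0 /\ tau' g 1%g = 0,
        forall g h l, delta2 tau' g h l = f g h l *+ (p ^ k)%N
      & ncobound3 [set: gT] (fun g h l => f g h l - eta3 g h l)].

(* I^2(P, M_k) = image of pro : Z^2(P,T) -> Z^2(P, T/p^k T) *)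
Definition in_I2 (k : nat) (tau : gT -> gT -> T) :=
  exists sigma, ncocycle2 [set: gT] eq sigma /\
    forall g h, eqmod k (tau g h) (sigma g h).

(* Hypotheses defining the coclass family (G_x) attached to eta3 (a
   representative of eta in H^3(P,T)), with |P| = p^m, e = 3m,
   M_x = T/p^(x+e)T, K x = K^2(P,M_x) (as a set of T-valued representatives)
   and etax x = eta_x. *)
Definition coclass_family_data (m : nat) (rho : gT -> gT -> T)
    (eta3 : gT -> gT -> gT -> T) (K : nat -> (gT -> gT -> T) -> Prop)
    (etax : nat -> gT -> gT -> T) :=
  forall x : nat, let k := (x + 3 * m)%N in
  [/\ (* K x is a subgroup of Z^2(P, M_x), closed under the equality of M_x *)
      [/\ K x (fun _ _ => 0),
          forall t1 t2, K x t1 -> K x t2 -> K x (fun g h => t1 g h - t2 g h),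
          forall t, K x t -> ncocycle2 [set: gT] (eqmod k) t
        & forall t t', K x t -> (forall g h, eqmod k (t g h) (t' g h)) -> K x t'],
      (* K^2(P,M_x) <= J^2(P,M_x) *)
      forall t, K x t -> forall g h, exists s, eqmod k (t g h) (s *+ (p ^ (k - m))%N),
      (* K^2(P,M_x) is a complement of I^2(P,M_x) in Z^2(P,M_x) *)
      (forall t, K x t -> in_I2 k t -> forall g h, eqmod k (t g h) 0) /\
      (forall t, ncocycle2 [set: gT] (eqmod k) t -> exists t1 t2,
         [/\ K x t1, in_I2 k t2 & forall g h, eqmod k (t g h) (t1 g h + t2 g h)]),
      (* mul(K^2(P,M_x)) = K^2(P,M_{x+1}) *)
      (forall t', K x.+1 t' <-> exists t, K x t /\
         forall g h, eqmod k.+1 (t' g h) (t g h *+ p))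
    & (* the composite map restricted to K^2(P,M_x) is an isomorphism onto
         H^3(P,T) *)
      [/\ forall t1 t2 f, K x t1 -> K x t2 -> conn_map k t1 f -> conn_map k t2 f ->
             forall g h, eqmod k (t1 g h) (t2 g h),
           forall f, ncocycle3 [set: gT] f -> exists t, K x t /\ conn_map k t f,
           (* eta_x is the preimage of eta in K^2(P,M_x) *)
           K x (etax x)
         & conn_map k (etax x) eta3]].

Definition in_L_eta (rho : gT -> gT -> T) (eta3 : gT -> gT -> gT -> T)
    (L : {set gT}) :=
  [/\ (p.-abelem L)%g, ncobound2 L eq rho & ncobound3 L eta3].

End Cohomology.

(* Main.v *)
Require Import Defs.
From HB Require Import structures.
From mathcomp Require Import all_boot all_order all_algebra all_fingroup all_solvable.
From mathcomp Require Import boolp.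
Set Implicit Arguments. Unset Strict Implicit. Unset Printing Implicit Defensive.
Import GRing.Theory.
Local Open Scope ring_scope.

Ltac zc0 := repeat match goal with
 | |- context [- ?x] =>
    rewrite ?(addrAC _ (- x)) ?(addrAC _ x); first [rewrite addrK | rewrite subrK]
 end.
Ltac zcancel := apply/eqP; rewrite -subr_eq0; apply/eqP; match goal with |- ?a = 0 => rewrite -(add0r a) end;
  rewrite ?opprD ?opprK ?oppr0 ?addr0 ?addrA; zc0; rewrite ?addr0 ?add0r ?subr0; try reflexivity.

Section Gen.
Variables (gT : finGroupType) (T : zmodType) (act : T -> gT -> T).
Hypothesis Hact : is_right_action act.

Lemma act1 t : act t 1%g = t. Proof. by case: Hact. Qed.
Lemma actM t g h : act t (g * h)%g = act (act t g) h. Proof. by case: Hact. Qed.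
Lemma actD t1 t2 g : act (t1 + t2) g = act t1 g + act t2 g. Proof. by case: Hact. Qed.
Lemma act0 g : act 0 g = 0.
Proof. by apply: (addrI (act 0 g)); rewrite -actD !addr0. Qed.
Lemma actN t g : act (- t) g = - act t g.
Proof. by apply/eqP; rewrite -addr_eq0 -actD addNr act0. Qed.
Lemma actB t1 t2 g : act (t1 - t2) g = act t1 g - act t2 g.
Proof. by rewrite actD actN. Qed.
Lemma actMn t g n : act (t *+ n) g = act t g *+ n.
Proof. by elim: n => [|n IH]; rewrite ?act0 // !mulrS actD IH. Qed.

Lemma d2d1 c g h l : delta2 act (delta1 act c) g h l = 0.
Proof.
rewrite /delta2 /delta1 !actD actN !actM -!mulgA.
zcancel.
Qed.

Lemma d1D a b g h : delta1 act (fun y => a y + b y) g h = delta1 act a g h + delta1 act b g h.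
Proof. rewrite /delta1 actD; zcancel. Qed.
Lemma d1N a g h : delta1 act (fun y => - a y) g h = - delta1 act a g h.
Proof. rewrite /delta1 actN; zcancel. Qed.
Lemma d1Mn a n g h : delta1 act (fun y => a y *+ n) g h = delta1 act a g h *+ n.
Proof. by rewrite /delta1 actMn mulrnDl mulrnBl. Qed.
Lemma d2D u v g h l : delta2 act (fun x y => u x y + v x y) g h l
   = delta2 act u g h l + delta2 act v g h l.
Proof. rewrite /delta2 actD; zcancel. Qed.
Lemma d2B u v g h l : delta2 act (fun x y => u x y - v x y) g h l
   = delta2 act u g h l - delta2 act v g h l.
Proof. rewrite /delta2 actB; zcancel. Qed.
Lemma d2Mn u n g h l : delta2 act (fun x y => u x y *+ n) g h l = delta2 act u g h l *+ n.
Proof. by rewrite /delta2 actMn mulrnBl mulrnDl mulrnBl. Qed.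
Lemma d1_1l a g : a 1%g = 0 -> delta1 act a 1%g g = 0.
Proof. move=> a1; rewrite /delta1 a1 act0 mul1g. zcancel. Qed.
Lemma d1_1r a g : a 1%g = 0 -> delta1 act a g 1%g = 0.
Proof. move=> a1; rewrite /delta1 a1 act1 mulg1; zcancel. Qed.

Lemma d2_ext (L : {group gT}) u v g h l :
  (forall x y, x \in L -> y \in L -> u x y = v x y) ->
  g \in L -> h \in L -> l \in L -> delta2 act u g h l = delta2 act v g h l.
Proof.
move=> E gL hL lL; rewrite /delta2 !E ?groupM //.
Qed.

Lemma act_sum (L : {set gT}) (F : gT -> T) l :
  act (\sum_(g in L) F g) l = \sum_(g in L) act (F g) l.
Proof. by apply: (big_morph (fun t => act t l)) => [a b|]; rewrite ?actD ?act0. Qed.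

Lemma avg (L : {group gT}) u :
  (forall g h l, g \in L -> h \in L -> l \in L -> delta2 act u g h l = 0) ->
  forall h l, h \in L -> l \in L ->
  u h l *+ #|L| = delta1 act (fun y => \sum_(g in L) u g y) h l.
Proof.
move=> Hu h l hL lL.
have H : \sum_(g in L) delta2 act u g h l = 0 by apply: big1 => g gL; apply: Hu.
have Hre : \sum_(g in L) u (g * h)%g l = \sum_(g in L) u g l.
  by rewrite [RHS](reindex_inj (mulIg h)); apply: eq_bigl => g; rewrite groupMr.
move: H; rewrite /delta2 sumrB big_split sumrB /= sumr_const Hre -act_sum.
move=> H; apply/eqP; rewrite -subr_eq0; apply/eqP; rewrite -[RHS]H /delta1; zcancel.
Qed.
End Gen.
Lemma padic_mulnE p (a : padic p) N n :
  padic_val (a *+ N) n = ((a n * N%:Z) %% (p ^ n)%:Z)%Z.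
Proof.
elim: N => [|N IH]; first by rewrite mulr0 /= /padic_lift !mod0z.
rewrite mulrS /= /padic_lift IH modzDmr.
by congr (_ %% _)%Z; rewrite -addn1 PoszD mulrDr mulr1 addrC.
Qed.

Lemma padic_iter p (a : padic p) n j : a n = (a (n + j)%N %% (p ^ n)%:Z)%Z.
Proof.
elim: j => [|j IH]; first by rewrite addn0 padic_red.
by rewrite IH addnS (padic_valP a (n + j)) expnD PoszM modz_mulr_mod.
Qed.

Lemma padic_tf p j (a : padic p) : prime p -> a *+ (p ^ j) = 0 -> a = 0.
Proof.
move=> pp H; apply: padic_eq => n.
have H0 : padic_val (0 : padic p) n = 0 by rewrite /= /padic_lift mod0z.
rewrite H0 (padic_iter a n j).
have := congr1 (fun b : padic p => padic_val b (n + j)%N) H.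
rewrite /= padic_mulnE /padic_lift mod0z => /intdiv.dvdz_mod0P.
rewrite expnD !PoszM intdiv.dvdz_mul2r; first by move/intdiv.dvdz_mod0P.
by rewrite -lt0n expn_gt0 prime_gt0.
Qed.

Lemma rv_tf p d j (t : 'rV[padic p]_d) : prime p -> t *+ (p ^ j) = 0 -> t = 0.
Proof.
move=> pp H; apply/matrixP => i k; have := congr1 (fun M : 'M[padic p]_(1, d) => M i k) H.
have z0 : (0 : 'M[padic p]_(1, d)) i k = 0 by rewrite mxE.
rewrite mulmxnE z0 => Hik. by rewrite (padic_tf pp Hik).
Qed.
Section Main.
Variables (p : nat) (gT : finGroupType) (T : zmodType) (act : T -> gT -> T).
Hypothesis Hact : is_right_action act.
Hypothesis tf : forall j (t : T), t *+ (p ^ j) = 0 -> t = 0.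
Local Notation N j := (p ^ j)%N.

Lemma splits_iff (A : {group gT}) k sigma :
  eqmod p k (sigma 1%g 1%g) 0 ->
  ext_splits act A (eqmod p k) sigma <->
  exists a : gT -> T, a 1%g = 0 /\ forall g h, g \in A -> h \in A ->
     eqmod p k (sigma g h) (delta1 act a g h).
Proof.
move=> [t0 Ht0]; split.
- move=> [c Hc].
  have [t1 Ht1] := (Hc 1%g 1%g (group1 A) (group1 A)).2.
  move: Ht1; rewrite /= mulg1 (act1 Hact) => Ht1.
  pose e := t1 - t0.
  have Hc1 : c 1%g = e *+ N k.
    by rewrite mulrnBl -Ht1 -Ht0; zcancel.
  pose dt (y : gT) := if y == 1%g then e else 0.
  exists (fun y => - c y + dt y *+ N k); split.
    by rewrite /dt eqxx Hc1 addNr.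
  move=> g h gA hA; have [tX HX] := (Hc g h gA hA).2; move: HX => /= HX.
  exists (tX - (dt h - dt (g * h)%g + act (dt g) h)).
  rewrite mulrnBl mulrnDl mulrnBl -HX /delta1 (actD Hact) (actN Hact) !(actMn Hact); zcancel.
- move=> [a [a1 Ha]]; exists (fun y => - a y) => g h gA hA /=; split => //.
  have [t Ht] := Ha g h gA hA; exists t; rewrite -Ht /delta1 (actN Hact); zcancel.
Qed.

Lemma choose2 (L : {set gT}) (P : gT -> gT -> T -> Prop) :
  (forall g h, g \in L -> h \in L -> exists s, P g h s) ->
  exists s : gT -> gT -> T, forall g h, g \in L -> h \in L -> P g h (s g h).
Proof.
move=> H.
have H' : forall gh : gT * gT, exists s, gh.1 \in L -> gh.2 \in L -> P gh.1 gh.2 s.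
  move=> [g h] /=; case: (boolP (g \in L)) => gL; last by exists 0.
  case: (boolP (h \in L)) => hL; last by exists 0.
  by have [s Hs] := H g h gL hL; exists s.
have [s Hs] := choice H'.
by exists (fun g h => s (g, h)) => g h gL hL; apply: (Hs (g, h)).
Qed.

Lemma kill_dummy : True. Proof. by []. Qed.
Lemma kill (L : {group gT}) m j z :
  (#|L| %| N m)%N -> (m <= j)%N ->
  (forall g, g \in L -> z 1%g g = 0 /\ z g 1%g = 0) ->
  (forall g h l, g \in L -> h \in L -> l \in L -> delta2 act z g h l = 0) ->
  (forall g h, g \in L -> h \in L -> exists s, z g h = s *+ N j) ->
  exists b : gT -> T, b 1%g = 0 /\ forall g h, g \in L -> h \in L -> z g h = delta1 act b g h.
Proof.
move=> dL mj Hn Hc Hd.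
have [s Hs] := choose2 Hd.
have sn : forall g, g \in L -> s 1%g g = 0 /\ s g 1%g = 0.
  move=> g gL; split; apply: (tf (j := j)).
    by rewrite -Hs ?group1 //; case: (Hn g gL).
  by rewrite -Hs ?group1 //; case: (Hn g gL).
have sc : forall g h l, g \in L -> h \in L -> l \in L -> delta2 act s g h l = 0.
  move=> g h l gL hL lL; apply: (tf (j := j)).
  rewrite -(d2Mn Hact) -(Hc g h l gL hL lL).
  by apply: (@d2_ext _ _ act L) => // x y xL yL; rewrite Hs.
have dj : (#|L| %| N j)%N by apply: (dvdn_trans dL); apply: dvdn_exp2l.
have [q Hq] := dvdnP dj.
exists (fun y => (\sum_(g in L) s g y) *+ q); split.
  by rewrite big1 ?mul0rn // => g gL; case: (sn g gL).
move=> g h gL hL; rewrite Hs // Hq mulnC mulrnA (avg Hact sc) //.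
by rewrite (d1Mn Hact).
Qed.

Lemma main_gen (L : {group gT}) m k rho eta3 etax :
  (#|L| %| N m)%N -> (m + m <= k)%N ->
  ncocycle2 act [set: gT] eq rho ->
  eqmod p k (etax 1%g 1%g) 0 ->
  (forall g h, exists s, eqmod p k (etax g h) (s *+ N (k - m))) ->
  conn_map p act k etax eta3 ->
  (ext_splits act L (eqmod p k) (fun g h => rho g h + etax g h) <->
     ncobound2 act L eq rho /\ ncobound3 act L eta3) /\
  (ext_splits act L (eqmod p k) (fun g h => rho g h + etax g h) ->
     ext_splits act L eq rho).
Proof.
move=> dL mk [rn rc] e11 HJ [tau' [f [Htau Htn Hdf [v [vn Hv]]]]].
have mk' : (m <= k)%N by apply: leq_trans mk; apply: leq_addr.
have mkm : (m <= k - m)%N by rewrite leq_subRL.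
have NkE : forall t : T, t *+ N k = t *+ N m *+ N (k - m).
  by move=> t; rewrite -mulrnA -expnD subnKC.
have Hv' : forall g h l, f g h l - eta3 g h l = delta2 act v g h l.
  by move=> g h l; have := Hv g h l (in_setT _) (in_setT _) (in_setT _).
have r11 : rho 1%g 1%g = 0 by case: (rn 1%g (in_setT _)).
have s11 : eqmod p k (rho 1%g 1%g + etax 1%g 1%g) 0.
  by case: e11 => t Ht; exists t; rewrite r11 add0r.
have Hsp := @splits_iff L k (fun g h => rho g h + etax g h) s11.
have fwd : ext_splits act L (eqmod p k) (fun g h => rho g h + etax g h) ->
  exists a2 : gT -> T, a2 1%g = 0 /\
   (forall g h, g \in L -> h \in L -> rho g h = delta1 act a2 g h) /\
   ncobound3 act L eta3.
  move/Hsp => [a [a1 Ha]].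
  have [b [b1 Hb]] : exists b : gT -> T, b 1%g = 0 /\ forall g h, g \in L -> h \in L ->
      rho g h - delta1 act a g h = delta1 act b g h.
    apply: (kill (m := m) (j := k - m)) => //.
    - move=> g gL; rewrite (d1_1l Hact) // (d1_1r Hact) //.
      by have [r1 r2] := rn g (in_setT g); rewrite r1 r2 subrr.
    - move=> g h l gL hL lL; rewrite (d2B Hact) (d2d1 Hact) subr0.
      exact: rc (in_setT _) (in_setT _) (in_setT _).
    - move=> g h gL hL; have [t Ht] := Ha g h gL hL; have [s0 [t2 Ht2]] := HJ g h.
      exists ((t - t2) *+ N m - s0).
      rewrite !mulrnBl -!NkE -Ht -Ht2; zcancel.
  pose a2 := fun y => a y + b y.
  have Hr : forall g h, g \in L -> h \in L -> rho g h = delta1 act a2 g h.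
    by move=> g h gL hL; rewrite (d1D Hact) -Hb //; zcancel.
  exists a2; split; first by rewrite /a2 a1 b1 addr0.
  split => //.
  pose e := fun y => a y + - a2 y.
  have He : forall g h, g \in L -> h \in L ->
      exists w, tau' g h - delta1 act e g h = w *+ N k.
    move=> g h gL hL; have [t Ht] := Ha g h gL hL; have [t1 Ht1] := Htau g h.
    exists (t - t1); rewrite mulrnBl -Ht -Ht1 /e (d1D Hact) (d1N Hact) -Hr //; zcancel.
  have [w Hw] := choose2 He.
  have e1 : e 1%g = 0 by rewrite /e /a2 a1 b1 !(addr0, oppr0).
  have wn : forall g, g \in L -> w 1%g g = 0 /\ w g 1%g = 0.
    move=> g gL; split; apply: (tf (j := k)); rewrite -Hw ?group1 //.
      by rewrite (d1_1l Hact) // subr0; exact: (Htn g).1.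
    by rewrite (d1_1r Hact) // subr0; exact: (Htn g).2.
  have fw : forall g h l, g \in L -> h \in L -> l \in L -> f g h l = delta2 act w g h l.
    move=> g h l gL hL lL; apply/eqP; rewrite -subr_eq0; apply/eqP; apply: (tf (j := k)).
    rewrite mulrnBl -Hdf -(d2Mn Hact).
    rewrite (@d2_ext _ _ act L tau' (fun x y => delta1 act e x y + w x y *+ N k)) //.
      by rewrite (d2D Hact) (d2d1 Hact) add0r subrr.
    by move=> x y xL yL; rewrite -Hw //; zcancel.
  exists (fun x y => w x y - v x y); split.
    move=> g gL; have [w1 w2] := wn g gL; have [v1 v2] := vn g (in_setT g).
    by rewrite w1 w2 v1 v2 subrr.
  by move=> g h l gL hL lL; rewrite (d2B Hact) -fw // -Hv'; zcancel.
split; [split|].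
- by move/fwd => [a2 [a21 [Hr Heta]]]; split => //; exists a2; split.
- move=> [[c0 [c01 Hc0]] [u0 [u0n Hu0]]]; apply/Hsp.
  pose z := fun g h => tau' g h - (u0 g h + v g h) *+ N k.
  have [b [b1 Hb]] : exists b : gT -> T, b 1%g = 0 /\ forall g h, g \in L -> h \in L ->
      z g h = delta1 act b g h.
    apply: (kill (m := m) (j := k - m)) => //.
    - move=> g gL; rewrite /z; have [t1 t2] := Htn g; have [a1 a2'] := u0n g gL.
      have [v1 v2] := vn g (in_setT g).
      by rewrite t1 t2 a1 a2' v1 v2 addr0 mul0rn subrr.
    - move=> g h l gL hL lL; rewrite /z (d2B Hact) (d2Mn Hact) (d2D Hact) Hdf -Hu0 //.
      rewrite -Hv' mulrnDl mulrnBl; zcancel.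
    - move=> g h gL hL; have [t1 Ht1] := Htau g h; have [s0 [t2 Ht2]] := HJ g h.
      exists (s0 + (t2 - t1 - (u0 g h + v g h)) *+ N m).
      rewrite /z !(mulrnDl, mulrnBl, mulNrn) -!NkE -Ht1 -Ht2; zcancel.
  exists (fun y => c0 y + b y); split; first by rewrite c01 b1 addr0.
  move=> g h gL hL; have [t1 Ht1] := Htau g h; exists (t1 + (u0 g h + v g h)).
  rewrite (d1D Hact) -Hc0 // -Hb // /z !mulrnDl -Ht1; zcancel.
- move/fwd => [a2 [a21 [Hr _]]]; exists (fun y => - a2 y) => g h gL hL /=; split => //.
  rewrite Hr // /delta1 (actN Hact); zcancel.
Qed.
End Main.

Theorem lemma5p1 (p d m ell : nat) (gT : finGroupType)
    (act : 'rV[padic p]_d -> gT -> 'rV[padic p]_d)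
    (rho : gT -> gT -> 'rV[padic p]_d)
    (eta3 : gT -> gT -> gT -> 'rV[padic p]_d)
    (K : nat -> (gT -> gT -> 'rV[padic p]_d) -> Prop)
    (etax : nat -> gT -> gT -> 'rV[padic p]_d)
    (L : {group gT}) (x : nat) :
  prime p -> (0 < d)%N -> #|gT| = (p ^ m)%N ->
  is_right_action act ->
  ncocycle2 act [set: gT] eq rho ->
  (forall z, ext_lcs p act rho ell z <-> z.1 = 1%g) ->
  (forall i, ext_index act rho (ext_Tser p act rho i) (ext_Tser p act rho i.+1) p) ->
  ncocycle3 act [set: gT] eta3 ->
  coclass_family_data p act m rho eta3 K etax ->
  (p.-abelem L)%g ->
  (ext_splits act L (eqmod p (x + 3 * m)) (fun g h => rho g h + etax x g h)
     <-> in_L_eta p act rho eta3 L) /\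
  (ext_splits act L (eqmod p (x + 3 * m)) (fun g h => rho g h + etax x g h) ->
     ext_splits act L eq rho).
Proof.
move=> pp d0 Hcard Hact Hrho _ _ _ Hcf Hab.
have [[K0 KB Kcoc Kext] HJ _ _ [_ _ Ketax Hconn]] := Hcf x.
have tf : forall j (t : 'rV[padic p]_d), t *+ (p ^ j) = 0 -> t = 0.
  by move=> j t; apply: rv_tf.
have dL : (#|L| %| p ^ m)%N.
  by rewrite -Hcard -cardsT; apply: cardSg; apply: subsetT.
have mk : (m + m <= x + 3 * m)%N.
  by rewrite (mulSn 2) (mulSn 1) mul1n addnA leq_addl.
have e11 := ((Kcoc _ Ketax).1 1%g (in_setT _)).1.
have HJ' := HJ _ Ketax.
have [H1 H2] := main_gen Hact tf dL mk Hrho e11 HJ' Hconn.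
split => //; rewrite H1; split.
  by move=> [? ?]; split.
by move=> [_ ? ?]; split.
Qed.
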